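(* Let $A\in\mathrm{GL}(\mathcal S)$, let $\varepsilon_A\in\mathrm{Inv}(\mathcal S)$ be the unique element with $\varepsilon_A\circ A(\Delta_0)=\Delta_0$, and let $\sigma\in S_6$ be the permutation with $\varepsilon_A\circ A(\mathfrak p_i)=\mathfrak p_{\sigma(i)}$ for $i=1,\dots,6$. Then for every $1\le i\le6$, $$A\circ\varepsilon^{(i)}=\varepsilon^{(\sigma(i))}\circ A .$$
   Context: Work over an algebraically closed field of characteristic $\neq2$. $F(X)=\sum_{i=0}^6f_iX^i$, $f_6\neq0$, distinct roots $\theta_1,\dots,\theta_6$. $P_j(X)=\prod_{i\ne j}(X-\theta_i)$, $\omega_j=P_j(\theta_j)$. Points of $\mathbb P^5$ are identified with $P(X)=\sum_{j=0}^5p_jX^j$; $\pi_j=P(\theta_j)/\omega_j$. $\mathcal S\subset\mathbb P^5$ is defined by $\sum_j\theta_j^i\omega_j\pi_j^2=0$, $i=0,1,2$. $\varepsilon^{(i)}$ is the involution $\pi_j\mapsto(-1)^{\delta_{ij}}\pi_j$; $\mathrm{Inv}(\mathcal S)$ is the commutative group of order 32 generated by them. $\Delta_0=\{(p_0:p_1:0:0:0:0)\}$, $\Delta_i=\varepsilon^{(i)}(\Delta_0)$, $\Delta_{ij}=\varepsilon^{(i)}\varepsilon^{(j)}(\Delta_0)$, $\Delta_{ijk}=\varepsilon^{(i)}\varepsilon^{(j)}\varepsilon^{(k)}(\Delta_0)$; these 32 lines are all the lines on $\mathcal S$, and $\mathrm{Inv}(\mathcal S)$ permutes them simply transitively. $\mathfrak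 p_i=\Delta_0\cap\Delta_i=(-\theta_i:1:0:0:0:0)$; these are the only points of $\Delta_0$ lying on another line of $\mathcal S$. $\mathrm{GL}(\mathcal S)$ is the group of automorphisms of $\mathcal S$ which are restrictions of projective linear transformations of $\mathbb P^5$. *)

(* Defs.v *)
From HB Require Import structures.
From mathcomp Require Import all_boot all_order all_algebra all_fingroup.
Set Implicit Arguments. Unset Strict Implicit. Unset Printing Implicit Defensive.
Import GRing.Theory.
Local Open Scope ring_scope.

Section Kummer.
Variable K : closedFieldType.
Variable theta : 'I_6 -> K.

Definition omega (j : 'I_6) : K := \prod_(i < 6 | i != j) (theta j - theta i).

(* Points of P^5 are nonzero column vectors p = (p_0,...,p_5)^T up to scalar;
   P(X) = sum_j p_j X^j.  piMx maps p to (pi_1,...,pi_6), pi_j = P(theta_j)/omega_j. *)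
Definition piMx : 'M[K]_6 := \matrix_(j < 6, k < 6) (theta j ^+ k / omega j).

Definition piv (p : 'cV[K]_6) (j : 'I_6) : K := (piMx *m p) j 0.

Definition peq (u v : 'cV[K]_6) : Prop := exists2 c : K, c != 0 & u = c *: v.

Definition inS (p : 'cV[K]_6) : Prop :=
  p != 0 /\ forall i : nat, (i < 3)%N ->
    \sum_(j < 6) theta j ^+ i * omega j * piv p j ^+ 2 = 0.

Definition inGLS (M : 'M[K]_6) : Prop :=
  M \in unitmx /\ forall p, inS p <-> inS (M *m p).

(* eps_T = product of eps^(i), i in T; in pi-coordinates it flips the signs
   of pi_i for i in T.  Inv(S) = { eps_T | T : {set 'I_6} } (as projective maps). *)
Definition epsSet (T : {set 'I_6}) : 'M[K]_6 :=
  invmx piMx *m diag_mx (\row_(j < 6) (if j \in T then -1 else 1)) *m piMx.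

Definition eps (i : 'I_6) : 'M[K]_6 := epsSet [set i].

Definition inDelta0 (p : 'cV[K]_6) : Prop := forall j : 'I_6, (2 <= j)%N -> p j 0 = 0.

Definition frakp (i : 'I_6) : 'cV[K]_6 :=
  \col_(k < 6) (if k == 0 :> nat then - theta i else if k == 1 :> nat then 1 else 0).

End Kummer.

(* Main.v *)
Require Import Defs.
From HB Require Import structures.
From mathcomp Require Import all_boot all_order all_algebra all_fingroup.
Import GRing.Theory.
Local Open Scope ring_scope.
Set Implicit Arguments. Unset Strict Implicit.


Lemma omega_neq0 (K : closedFieldType) (theta : 'I_6 -> K) (hinj : injective theta) j :
  omega theta j != 0.
Proof.
apply/prodf_neq0 => i hij.
by rewrite subr_eq0; apply: contra hij => /eqP /hinj ->.
Qed.

Definition kerW (K : closedFieldType) (theta : 'I_6 -> K) (z : 'I_6 -> K) :=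
  forall i : nat, (i < 3)%N -> \sum_j theta j ^+ i * omega theta j * z j = 0.

Lemma kerW_poly (K : closedFieldType) (theta : 'I_6 -> K) z (Q : {poly K}) :
  kerW theta z -> (size Q <= 3)%N -> \sum_j Q.[theta j] * omega theta j * z j = 0.
Proof.
move=> hz hQ.
transitivity (\sum_(i < 3) Q`_i * \sum_j theta j ^+ i * omega theta j * z j).
  rewrite (eq_bigr (fun j => \sum_(i < 3) Q`_i * (theta j ^+ i * omega theta j * z j))).
    by rewrite exchange_big /=; apply: eq_bigr => i _; rewrite mulr_sumr.
  move=> j _; rewrite (horner_coef_wide _ hQ) !mulr_suml; apply: eq_bigr => i _.
  by rewrite !mulrA.
by apply: big1 => i _; rewrite hz ?mulr0.
Qed.

Lemma unit_of_inj (K : fieldType) n (M : 'M[K]_n) :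
  (forall z : 'rV_n, z *m M = 0 -> z = 0) -> M \in unitmx.
Proof.
move=> H; rewrite -row_free_unit -kermx_eq0; apply/eqP/row_matrixP => i.
by rewrite row0; apply: H; rewrite -row_mul mulmx_ker row0.
Qed.

Lemma ker_exists (K : fieldType) m n (C : 'M[K]_(m, n)) : (n < m)%N ->
  exists2 z : 'rV_m, z != 0 & z *m C = 0.
Proof.
move=> hnm.
have : kermx C != 0.
  rewrite -mxrank_eq0 mxrank_ker subn_eq0 -ltnNge.
  exact: leq_ltn_trans (rank_leq_col C) hnm.
case: (pickP (fun i => row i (kermx C) != 0)) => [i hi | h].
  by move=> _; exists (row i (kermx C)) => //; rewrite -row_mul mulmx_ker row0.
case/eqP; apply/row_matrixP => i; rewrite row0; apply/eqP.
by move: (h i) => /negbFE.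
Qed.

Lemma sqrt_exists (K : closedFieldType) (x : K) : exists y, y ^+ 2 = x.
Proof.
have : size ('X^2 - x%:P : {poly K}) != 1%N by rewrite size_XnsubC.
case/closed_rootP => y; rewrite rootE !hornerE subr_eq0 => /eqP hy.
by exists y.
Qed.

Lemma V_unit (K : closedFieldType) (theta : 'I_6 -> K) (hinj : injective theta) :
  piMx theta \in unitmx.
Proof.
rewrite -unitmx_tr; apply: unit_of_inj => z hz.
pose P : {poly K} := \poly_(k < 6) z 0 (inord k).
have hP : P = 0.
  apply/eqP; apply: contraT => nzP.
  have := max_poly_roots nzP (rs := [seq theta j | j <- enum 'I_6]).
  rewrite map_inj_uniq // enum_uniq size_map size_enum_ord.
  have -> : all (root P) [seq theta j | j <- enum 'I_6].
    apply/allP => x /mapP [j _ ->]; rewrite rootE horner_poly.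
    have := congr1 (fun M : 'M[K]_(1,6) => M 0 j) hz; rewrite !mxE => h.
    have : (\sum_(k < 6) z 0 (inord k) * theta j ^+ k) / omega theta j = 0.
      rewrite mulr_suml -[RHS]h; apply: eq_bigr => k _; rewrite !mxE inord_val mulrA //.
    by move/eqP; rewrite mulf_eq0 invr_eq0 (negPf (omega_neq0 hinj j)) orbF.
  by move=> /(_ isT isT); rewrite ltnNge size_poly.
apply/rowP => k; rewrite !mxE.
have := congr1 (fun Q : {poly K} => Q`_k) hP; rewrite coef_poly ltn_ord coef0 inord_val => ->.
by [].
Qed.

Lemma V3 (K : closedFieldType) (theta : 'I_6 -> K) (hinj : injective theta) z :
  kerW theta z -> (#|[set k | z k != 0%R]| <= 3)%N -> forall t, z t = 0.
Proof.
move=> hz hU t; apply/eqP; apply: contraT => hzt.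
set U := [set k | z k != 0%R] in hU.
pose s := [seq theta j | j <- enum (U :\ t)].
pose Q : {poly K} := \prod_(a <- s) ('X - a%:P).
have hQ : (size Q <= 3)%N.
  rewrite size_prod_XsubC size_map -cardE.
  have : t \in U by rewrite inE.
  by move: hU; rewrite (cardsD1 t) => hU ht; rewrite ht in hU.
have := kerW_poly hz hQ; rewrite (bigD1 t) //= big1 ?addr0.
  move/eqP; rewrite !mulf_eq0 (negPf hzt) (negPf (omega_neq0 hinj t)) !orbF.
  rewrite -rootE root_prod_XsubC; case/mapP => j; rewrite mem_enum !inE => /andP [hjt _].
  by move/hinj => e; rewrite e eqxx in hjt.
move=> j hjt; case hj: (z j == 0); first by rewrite (eqP hj) mulr0.
have : root Q (theta j).
  by rewrite root_prod_XsubC; apply: map_f; rewrite mem_enum !inE hjt hj.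
by rewrite rootE => /eqP ->; rewrite !mul0r.
Qed.

Lemma sum_delta (K : closedFieldType) (z : 'I_6 -> K) m :
  \sum_r z r * (r == m)%:R = z m.
Proof.
rewrite (bigD1 m) //= eqxx mulr1 big1 ?addr0 // => r hr.
by rewrite (negPf hr) mulr0.
Qed.

Lemma E4 (K : closedFieldType) (theta : 'I_6 -> K) (hinj : injective theta) m1 m2 :
  m1 != m2 -> exists z, [/\ kerW theta z, z m1 = 0, z m2 = 0 &
      forall k, k != m1 -> k != m2 -> z k != 0].
Proof.
move=> hm.
pose C : 'M[K]_(6, 5) := \matrix_(r, c) (if (c < 3)%N then theta r ^+ c * omega theta r
   else if c == 3 :> nat then (r == m1)%:R else (r == m2)%:R).
have [zz nz hzz] := ker_exists C isT.
pose z k := zz 0 k.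
have col c : \sum_r z r * C r c = 0.
  by have := congr1 (fun M : 'M[K]_(1,5) => M 0 c) hzz; rewrite !mxE.
have hker : kerW theta z.
  move=> i hi; have := col (Ordinal (ltn_trans hi (isT : (3 < 5)%N))).
  rewrite /=; under eq_bigr => r _ do rewrite mxE hi.
  by move=> h; rewrite -[RHS]h; apply: eq_bigr => r _; rewrite mulrC.
have z1 : z m1 = 0.
  by have := col (Ordinal (isT : (3 < 5)%N)); under eq_bigr => r _ do rewrite mxE /=; rewrite sum_delta.
have z2 : z m2 = 0.
  by have := col (Ordinal (isT : (4 < 5)%N)); under eq_bigr => r _ do rewrite mxE /=; rewrite sum_delta.
exists z; split => // k hk1 hk2; apply/negP => /eqP hk.
case/eqP: nz; apply/rowP => j; rewrite mxE [zz 0 j]/=.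
have -> : zz 0 j = z j by [].
apply: (V3 hinj hker).
have sub : [set k0 | z k0 != 0%R] \subset ~: (k |: [set m1; m2]).
  apply/subsetP => x; rewrite !inE; apply: contra.
  by case/or3P => /eqP ->; rewrite ?hk ?z1 ?z2.
apply: leq_trans (subset_leq_card sub) _.
have h6 : #|'I_6| = 6%N := card_ord 6.
have := cardsC (k |: [set m1; m2]); rewrite h6 cardsU1 cards2 hm !inE.
by rewrite (negPf hk1) (negPf hk2) /= => e; rewrite -(leq_add2l 3) e.
Qed.

Definition inR (K : closedFieldType) (theta : 'I_6 -> K) (v : 'I_6 -> K) :=
  forall z, kerW theta z -> \sum_j v j * z j = 0.

Lemma Rvanish (K : closedFieldType) (theta : 'I_6 -> K) (hinj : injective theta) v a b c :
  inR theta v -> a != b -> a != c -> b != c -> v a = 0 -> v b = 0 -> v c = 0 ->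
  forall t, v t = 0.
Proof.
move=> hv hab hac hbc va vb vc t.
case ht: (t \in [set a; b; c]).
  by move: ht; rewrite !inE => /orP [/orP [] |] /eqP ->.
have : #|~: (t |: [set a; b; c])| == 2%N.
  have h6 : #|'I_6| = 6%N := card_ord 6.
  have := cardsC (t |: [set a; b; c]); rewrite h6 cardsU1 ht.
  rewrite (cardsD1 a) !inE eqxx /=.
  have -> : [set a; b; c] :\ a = [set b; c].
    apply/setP => x; rewrite !inE; case: (x =P a) => [-> | _] /=.
      by rewrite (negPf hab) (negPf hac).
    by [].
  by rewrite cards2 hbc /= => e; rewrite -(eqn_add2l 4) e.
case/cards2P => m1 [m2 [hm hX]].
have [z [hz z1 z2 nz]] := E4 hinj hm.
have hm1 : m1 \in ~: (t |: [set a; b; c]) by rewrite hX !inE eqxx.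
have hm2 : m2 \in ~: (t |: [set a; b; c]) by rewrite hX !inE eqxx orbT.
have nzt : z t != 0.
  by apply: nz; apply/eqP => e; [move: hm1 | move: hm2]; rewrite -e !inE eqxx.
have := hv z hz; rewrite (bigD1 t) //= big1 ?addr0.
  by move/eqP; rewrite mulf_eq0 (negPf nzt) orbF => /eqP.
move=> j hjt.
case hj: (j \in [set a; b; c]).
  by move: hj; rewrite !inE => /orP [/orP [] |] /eqP ->; rewrite ?va ?vb ?vc mul0r.
have : j \in ~: (t |: [set a; b; c]) by rewrite !inE negb_or hjt; move: hj; rewrite !inE => ->.
by rewrite hX !inE => /orP [] /eqP ->; rewrite ?z1 ?z2 mulr0.
Qed.

Definition Sp (K : closedFieldType) (theta : 'I_6 -> K) (y : 'cV[K]_6) :=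
  y != 0 /\ kerW theta (fun j => y j 0 ^+ 2).

Definition lam (K : closedFieldType) (theta : 'I_6 -> K) (Q : {poly K}) : 'rV[K]_6 :=
  \row_j (Q.[theta j] * omega theta j).

Definition Bm (K : closedFieldType) (N : 'M[K]_6) (l : 'rV[K]_6) := N^T *m (diag_mx l *m N).

Definition Fq (K : closedFieldType) (N : 'M[K]_6) (l : 'rV[K]_6) (y : 'cV[K]_6) :=
  \sum_k l 0 k * ((N *m y) k 0) ^+ 2.

Lemma Bm_entry (K : closedFieldType) (N : 'M[K]_6) l a b :
  Bm N l a b = \sum_k N k a * (l 0 k * N k b).
Proof. by rewrite /Bm mul_diag_mx !mxE; apply: eq_bigr => k _; rewrite !mxE. Qed.

Lemma Bm_sym (K : closedFieldType) (N : 'M[K]_6) l a b : Bm N l a b = Bm N l b a.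
Proof. by rewrite !Bm_entry; apply: eq_bigr => k _; rewrite [LHS]mulrCA [RHS]mulrCA (mulrC (N k a)). Qed.

Lemma Fq_expand (K : closedFieldType) (N : 'M[K]_6) l y :
  Fq N l y = \sum_a \sum_b Bm N l a b * (y a 0 * y b 0).
Proof.
have e1 : Fq N l y = ((N *m y)^T *m (diag_mx l *m (N *m y))) 0 0.
  rewrite /Fq mul_diag_mx !mxE; apply: eq_bigr => k _; rewrite !mxE.
  by rewrite [RHS]mulrCA expr2.
have e2 : (N *m y)^T *m (diag_mx l *m (N *m y)) = y^T *m (Bm N l *m y).
  by rewrite trmx_mul /Bm !mulmxA.
rewrite e1 e2 !mxE; apply: eq_bigr => a _; rewrite !mxE mulr_sumr.
apply: eq_bigr => b _; rewrite !mxE.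
by rewrite mulrCA mulrA.
Qed.

Definition Eb (K : closedFieldType) (b : bool) : K := if b then -1 else 1.

Lemma sgn_coef (K : closedFieldType) (u v w x : bool) :
  1 - Eb K u * Eb K v - Eb K w * Eb K x + (Eb K u * Eb K w) * (Eb K v * Eb K x)
  = if (u != v) && (w != x) then (1 + 1) * (1 + 1) else 0.
Proof.
have f : forall p q : K, 1 - p - q + p * q = (1 - p) * (1 - q).
  by move=> p q; rewrite mulrBr mulr1 mulrBl mul1r opprB addrA [in RHS]addrAC.
rewrite mulrACA f.
have g : forall a b : bool, 1 - Eb K a * Eb K b = if a != b then 1 + 1 else 0.
  by case; case; rewrite /Eb /= ?mulN1r ?mul1r ?opprK ?subrr ?opprK.
by rewrite !g; case: (u != v); case: (w != x); rewrite ?mul0r ?mulr0.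
Qed.

Lemma Fq_flip (K : closedFieldType) (N : 'M[K]_6) (l : 'rV[K]_6) (y : 'cV[K]_6) (s : 'I_6 -> K) :
  Fq N l (\col_k (s k * y k 0)) =
  \sum_c \sum_d Bm N l c d * (y c 0 * y d 0) * (s c * s d).
Proof.
rewrite Fq_expand; apply: eq_bigr => c _; apply: eq_bigr => d _;
by rewrite -mulrA; congr (_ * _); rewrite !mxE mulrACA mulrC.
Qed.

Lemma Sp_flip (K : closedFieldType) (theta : 'I_6 -> K) (y : 'cV[K]_6) (s : 'I_6 -> K) :
  (forall k, s k ^+ 2 = 1) -> Sp theta y -> Sp theta (\col_k (s k * y k 0)).
Proof.
move=> hs [nz hy]; split.
  apply: contra nz => /eqP e; apply/eqP/matrixP => i j; rewrite (ord1 j) mxE.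
  have := congr1 (fun M : 'cV[K]_6 => s i * M i 0) e; rewrite !mxE mulrA -expr2 hs mul1r.
  by rewrite mulr0.
move=> i hi; rewrite -[RHS](hy i hi); apply: eq_bigr => j _; rewrite mxE exprMn hs mul1r //.
Qed.

Lemma Fq0 (K : closedFieldType) (theta : 'I_6 -> K) (N : 'M[K]_6) (Q : {poly K}) (y : 'cV[K]_6) :
  (forall y, Sp theta y -> Sp theta (N *m y)) -> (size Q <= 3)%N ->
  Sp theta y -> Fq N (lam theta Q) y = 0.
Proof.
move=> hN hQ hy; have [_ hk] := hN y hy.
rewrite /Fq -[RHS](kerW_poly hk hQ); apply: eq_bigr => k _; rewrite mxE mulrA //.
Qed.

Lemma good_point (K : closedFieldType) (theta : 'I_6 -> K) (hinj : injective theta) a b :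
  a != b -> exists y, [/\ Sp theta y, y a 0 != 0 & y b 0 != 0].
Proof.
move=> hab.
set X := ~: [set a; b].
have hX : #|X| = 4%N.
  have h6 : #|'I_6| = 6%N := card_ord 6.
  have := cardsC [set a; b]; rewrite h6 cards2 hab /= => e.
  by apply/eqP; rewrite -(eqn_add2l 2) e.
have : (0 < #|X|)%N by rewrite hX.
rewrite card_gt0 => /set0Pn [m1 hm1].
have : (0 < #|X :\ m1|)%N by move: hX; rewrite (cardsD1 m1) hm1 add1n => -[->].
rewrite card_gt0 => /set0Pn [m2]; rewrite !inE => /andP [hm21 hm2].
move: hm1; rewrite !inE negb_or => /andP [h1a h1b].
move: hm2; rewrite negb_or => /andP [h2a h2b].
have [z [hz z1 z2 nzz]] : exists z, [/\ kerW theta z, z m1 = 0, z m2 = 0 & forall k, k != m1 -> k != m2 -> z k != 0] by apply: E4; rewrite // eq_sym.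
have sq : forall k, exists r : K, r ^+ 2 == z k.
  by move=> k; have [r hr] := sqrt_exists (z k); exists r; rewrite hr.
pose y : 'cV[K]_6 := \col_k (xchoose (sq k)).
have hy k : y k 0 ^+ 2 = z k by rewrite mxE (eqP (xchooseP (sq k))).
have nz k : k != m1 -> k != m2 -> y k 0 != 0.
  move=> k1 k2; apply: contra (nzz k k1 k2) => /eqP e.
  by rewrite -hy e expr0n.
exists y; split.
- split.
    apply/negP => /eqP e; have := nz a; rewrite e mxE.
    by rewrite eq_sym h1a eq_sym h2a => /(_ isT isT); rewrite eqxx.
  by move=> i hi; rewrite -[RHS](hz i hi); apply: eq_bigr => j _; rewrite hy.
- by apply: nz; rewrite eq_sym.
- by apply: nz; rewrite eq_sym.
Qed.

Lemma sum4 (K : closedFieldType) (F G H J : 'I_6 -> K) :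
  \sum_d (F d - G d - H d + J d) = \sum_d F d - \sum_d G d - \sum_d H d + \sum_d J d.
Proof. by rewrite big_split /= !sumrB. Qed.

Lemma Eb2 (K : closedFieldType) bb : Eb K bb ^+ 2 = 1.
Proof. by case: bb; rewrite /Eb ?sqrrN expr1n. Qed.

Lemma offdiag (K : closedFieldType) (theta : 'I_6 -> K) (hinj : injective theta)
  (h2 : (2%:R : K) != 0) (N : 'M[K]_6)
  (hN : forall y, Sp theta y -> Sp theta (N *m y)) (Q : {poly K}) (hQ : (size Q <= 3)%N)
  a b : a != b -> Bm N (lam theta Q) a b = 0.
Proof.
move=> hab.
have [y [hy ya yb]] := good_point hinj hab.
set l := lam theta Q.
pose X c d := Bm N l c d * (y c 0 * y d 0).
pose sa k := Eb K (k == a); pose sb k := Eb K (k == b); pose sab k := sa k * sb k.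
have hsa k : sa k ^+ 2 = 1 by apply: Eb2.
have hsb k : sb k ^+ 2 = 1 by apply: Eb2.
have hsab k : sab k ^+ 2 = 1 by rewrite exprMn hsa hsb mulr1.
have e : Fq N l y - Fq N l (\col_k (sa k * y k 0)) - Fq N l (\col_k (sb k * y k 0))
   + Fq N l (\col_k (sab k * y k 0)) = 0.
  by rewrite !(@Fq0 K theta N Q _ hN hQ) ?subrr ?sub0r ?oppr0 ?addr0 //; apply: Sp_flip.
have e2 : Fq N l y - Fq N l (\col_k (sa k * y k 0)) - Fq N l (\col_k (sb k * y k 0))
   + Fq N l (\col_k (sab k * y k 0)) =
   \sum_c \sum_d X c d * (1 - sa c * sa d - sb c * sb d + sab c * sab d).
  rewrite Fq_expand !Fq_flip -!sum4; apply: eq_bigr => c _; rewrite -sum4.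
  apply: eq_bigr => d _; rewrite /X.
  by rewrite mulrDr !mulrBr mulr1.
set four : K := (1 + 1) * (1 + 1).
have e3 : \sum_c \sum_d X c d * (1 - sa c * sa d - sb c * sb d + sab c * sab d)
   = X a b * four + X b a * four.
  under eq_bigr => c _ do under eq_bigr => d _ do rewrite /sab /sa /sb sgn_coef.
  pose G c d := X c d * (if ((c == a) != (d == a)) && ((c == b) != (d == b))
                         then four else 0).
  have ia : \sum_d G a d = X a b * four.
    rewrite (bigD1 b) //= big1 ?addr0 /G.
      by rewrite !eqxx (eq_sym b a) (negPf hab).
    move=> d hd; rewrite /G eqxx (negPf hab) /=.
    by rewrite (negPf hd) andbF mulr0.
  have ib : \sum_d G b d = X b a * four.
    rewrite (bigD1 a) //= big1 ?addr0 /G.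
      by rewrite !eqxx (eq_sym b a) (negPf hab).
    move=> d hd; rewrite /G eqxx (eq_sym b a) (negPf hab) /=.
    by rewrite (negPf hd) mulr0.
  have io : forall c, c != a -> c != b -> \sum_d G c d = 0.
    move=> c hca hcb; apply: big1 => d _; rewrite /G (negPf hca) (negPf hcb) /=.
    case: (d =P a) => [-> | _]; first by rewrite (negPf hab) mulr0.
    by rewrite mulr0.
  transitivity (\sum_c \sum_d G c d).
    by apply: eq_bigr => c _; apply: eq_bigr.
  rewrite (bigD1 a) //= ia (bigD1 b) 1?eq_sym //= ib big1 ?addr0 //.
  by move=> c /andP [hca hcb]; apply: io.
move: e; rewrite e2 e3 /X (Bm_sym N l b a) [y b 0 * _]mulrC -mulrDr.
move/eqP; rewrite !mulf_eq0 (negPf ya) (negPf yb) /= orbF => /orP [/eqP // |].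
have h4 : four != 0 by rewrite /four mulf_eq0 orbb -(natrD K 1 1).
rewrite -{1 2}[four]mulr1 -mulrDr mulf_eq0 (negPf h4) -(natrD K 1 1). by rewrite /= (negPf h2).
Qed.

Lemma diagR (K : closedFieldType) (theta : 'I_6 -> K) (hinj : injective theta)
  (h2 : (2%:R : K) != 0) (N : 'M[K]_6)
  (hN : forall y, Sp theta y -> Sp theta (N *m y)) (Q : {poly K}) (hQ : (size Q <= 3)%N) :
  inR theta (fun a => Bm N (lam theta Q) a a).
Proof.
move=> z hz.
case: (boolP [forall k, z k == 0]) => [/forallP z0 | ].
  by apply: big1 => k _; rewrite (eqP (z0 k)) mulr0.
rewrite negb_forall => /existsP [k0 hk0].
have sq : forall k, exists r : K, r ^+ 2 == z k.
  by move=> k; have [r hr] := sqrt_exists (z k); exists r; rewrite hr.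
pose y : 'cV[K]_6 := \col_k (xchoose (sq k)).
have hy k : y k 0 ^+ 2 = z k by rewrite mxE (eqP (xchooseP (sq k))).
have Spy : Sp theta y.
  split.
    apply/negP => /eqP e; move: hk0; rewrite -hy e mxE expr0n /= eqxx //.
  by move=> i hi; rewrite -[RHS](hz i hi); apply: eq_bigr => j _; rewrite hy.
have := @Fq0 K theta N Q y hN hQ Spy; rewrite Fq_expand => e; rewrite -[RHS]e.
apply: eq_bigr => a _; rewrite (bigD1 a) //= big1 ?addr0.
  by rewrite -expr2 hy.
by move=> b hb; rewrite (offdiag hinj h2 hN hQ) ?mul0r // eq_sym.
Qed.

Lemma Bm_diag (K : closedFieldType) (theta : 'I_6 -> K) (hinj : injective theta)
  (h2 : (2%:R : K) != 0) (N : 'M[K]_6)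
  (hN : forall y, Sp theta y -> Sp theta (N *m y)) (Q : {poly K}) (hQ : (size Q <= 3)%N) :
  Bm N (lam theta Q) = diag_mx (\row_a Bm N (lam theta Q) a a).
Proof.
have := offdiag hinj h2 hN hQ; set B := Bm N (lam theta Q) => hoff.
apply/matrixP => a b; rewrite !mxE.
case: (a =P b) => [-> | /eqP hab]; first by rewrite mulr1n.
by rewrite mulr0n; move: (hoff a b hab); rewrite /Bm mxE.
Qed.

Lemma MtBM (K : closedFieldType) (M Minv : 'M[K]_6) l :
  Minv *m M = 1%:M -> M^T *m Bm Minv l *m M = diag_mx l.
Proof.
move=> h; rewrite /Bm !mulmxA -trmx_mul h trmx1 mul1mx -mulmxA h mulmx1 //.
Qed.

Lemma lam_zero (K : closedFieldType) (theta : 'I_6 -> K) (hinj : injective theta)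
  (h2 : (2%:R : K) != 0) (M Minv : 'M[K]_6) (hMM : Minv *m M = 1%:M)
  (hN : forall y, Sp theta y -> Sp theta (Minv *m y)) (Q : {poly K}) (hQ : (size Q <= 3)%N) :
  (forall a, Bm Minv (lam theta Q) a a = 0) -> Q = 0.
Proof.
move=> h0.
have hB : Bm Minv (lam theta Q) = 0.
  rewrite (Bm_diag hinj h2 hN hQ); apply/matrixP => a b; rewrite [diag_mx _ a b]mxE [(\row_a _) 0 a]mxE h0 mul0rn mxE //.
have hl : diag_mx (lam theta Q) = 0 by rewrite -(MtBM _ hMM) hB mulmx0 mul0mx.
have hr a : root Q (theta a).
  have := congr1 (fun X : 'M[K]_6 => X a a) hl; rewrite !mxE eqxx mulr1n.
  by move/eqP; rewrite mulf_eq0 (negPf (omega_neq0 hinj a)) orbF.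
apply/eqP; apply: contraT => nzQ.
have := max_poly_roots nzQ (rs := [seq theta j | j <- enum 'I_6]).
rewrite map_inj_uniq // enum_uniq size_map size_enum_ord.
have -> : all (root Q) [seq theta j | j <- enum 'I_6].
  by apply/allP => x /mapP [j _ ->].
move=> /(_ isT isT) h; have := leq_trans h hQ.
by [].
Qed.

Lemma key_kill (K : closedFieldType) (theta : 'I_6 -> K) (hinj : injective theta)
  (h2 : (2%:R : K) != 0) (M Minv : 'M[K]_6) (hMM : Minv *m M = 1%:M) (hMu : M \in unitmx)
  (hN : forall y, Sp theta y -> Sp theta (Minv *m y)) (Q : {poly K}) (hQ : (size Q <= 3)%N)
  j k : root Q (theta j) -> M k j != 0 -> Bm Minv (lam theta Q) k k = 0.
Proof.
move=> hroot hkj.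
set D := Bm Minv (lam theta Q).
pose c : 'cV[K]_6 := D *m col j M.
have hc : M^T *m c = 0.
  rewrite /c /D colE !mulmxA -trmx_mul hMM trmx1 mul1mx -(mulmxA _ Minv M) hMM mulmx1.
  apply/colP => a; rewrite mul_diag_mx !mxE; case: (a =P j) => [-> | /eqP haj].
    by rewrite (eqP hroot) !mul0r.
  by rewrite mulr0.
have c0 : c = 0.
  have uT : M^T \in unitmx by rewrite unitmx_tr.
  by rewrite -(mulKmx uT c) hc mulmx0.
have hoff : forall b, b != k -> D k b = 0.
  by move=> b hb; apply: (offdiag hinj h2 hN hQ); rewrite eq_sym.
have := congr1 (fun X : 'cV[K]_6 => X k 0) c0; rewrite /c [LHS]mxE.
rewrite (bigD1 k) //= big1 ?addr0.
  by rewrite [col j M k 0]mxE [(0 : 'cV[K]_6) k 0]mxE => /eqP; rewrite mulf_eq0 (negPf hkj) orbF => /eqP.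
by move=> b hb; rewrite hoff ?mul0r.
Qed.

Lemma Bm_lin (K : closedFieldType) (theta : 'I_6 -> K) (N : 'M[K]_6) (c1 c2 : K) (Q1 Q2 : {poly K}) a b :
  Bm N (lam theta (c1 *: Q1 - c2 *: Q2)) a b =
  c1 * Bm N (lam theta Q1) a b - c2 * Bm N (lam theta Q2) a b.
Proof.
rewrite !Bm_entry !mulr_sumr -sumrB; apply: eq_bigr => k _; rewrite !mxE.
rewrite hornerD hornerN !hornerZ !mulrBl !mulrBr.
by congr (_ - _); rewrite -!mulrA mulrCA.
Qed.

Lemma size_Q2 (K : closedFieldType) (x : K) : size (('X - x%:P) * 'X) = 3%N.
Proof. by rewrite size_mulX ?size_XsubC // -size_poly_eq0 size_XsubC. Qed.

Lemma col_unique (K : closedFieldType) (theta : 'I_6 -> K) (hinj : injective theta)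
  (h2 : (2%:R : K) != 0) (M Minv : 'M[K]_6) (hMM : Minv *m M = 1%:M) (hMu : M \in unitmx)
  (hN : forall y, Sp theta y -> Sp theta (Minv *m y)) j k k' :
  M k j != 0 -> M k' j != 0 -> k = k'.
Proof.
move=> hk hk'; apply/eqP; apply: contraT => hkk.
pose Q1 : {poly K} := 'X - (theta j)%:P.
pose Q2 : {poly K} := ('X - (theta j)%:P) * 'X.
have sQ1 : (size Q1 <= 3)%N by rewrite size_XsubC.
have sQ2 : (size Q2 <= 3)%N by rewrite size_Q2.
have rQ1 : root Q1 (theta j) by rewrite root_XsubC.
have rQ2 : root Q2 (theta j) by rewrite rootM root_XsubC eqxx.
pose w1 a := Bm Minv (lam theta Q1) a a.
pose w2 a := Bm Minv (lam theta Q2) a a.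
have R1 : inR theta w1 := diagR hinj h2 hN sQ1.
have R2 : inR theta w2 := diagR hinj h2 hN sQ2.
have w1k : w1 k = 0 by apply: (key_kill hinj h2 hMM hMu hN sQ1 rQ1 hk).
have w1k' : w1 k' = 0 by apply: (key_kill hinj h2 hMM hMu hN sQ1 rQ1 hk').
have w2k : w2 k = 0 by apply: (key_kill hinj h2 hMM hMu hN sQ2 rQ2 hk).
have w2k' : w2 k' = 0 by apply: (key_kill hinj h2 hMM hMu hN sQ2 rQ2 hk').
have [t htk htk'] : exists2 t, t != k & t != k'.
  have : (0 < #|~: [set k; k']|)%N.
    have h6 : #|'I_6| = 6%N := card_ord 6.
    have := cardsC [set k; k']; rewrite h6 cards2 hkk /= => e.
    by rewrite -(ltn_add2l 2) e.
  rewrite card_gt0 => /set0Pn [t]; rewrite !inE negb_or => /andP [h1 h2'].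
  by exists t.
have hkt : k != t by rewrite eq_sym.
have hk't : k' != t by rewrite eq_sym.
case: (w1 t =P 0) => [w1t | /eqP w1t].
  have Q10 : Q1 = 0.
    apply: (lam_zero hinj h2 hMM hN sQ1) => a.
    exact: (Rvanish hinj R1 hkk hkt hk't w1k w1k' w1t).
  by move: (size_XsubC (theta j)); rewrite -/Q1 Q10 size_poly0.
pose Q := w2 t *: Q1 - w1 t *: Q2.
have sQ : (size Q <= 3)%N.
  rewrite /Q; apply: leq_trans (size_polyD _ _) _; rewrite size_polyN geq_max.
  by rewrite !(leq_trans (size_scale_leq _ _)).
pose w a := w2 t * w1 a - w1 t * w2 a.
have Rw : inR theta w.
  move=> z hz; rewrite /w.
  under eq_bigr => a _ do rewrite mulrBl -!mulrA.
  by rewrite sumrB -!mulr_sumr R1 // R2 // !mulr0 subrr.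
have w0 : forall a, w a = 0.
  apply: (Rvanish hinj Rw hkk hkt hk't); rewrite /w ?w1k ?w2k ?w1k' ?w2k' ?mulr0 ?subrr //.
  by rewrite mulrC subrr.
have Q0 : Q = 0.
  apply: (lam_zero hinj h2 hMM hN sQ) => a.
  by rewrite Bm_lin; apply: w0.
move: Q0; rewrite /Q => /eqP; rewrite subr_eq0 => /eqP e.
have := size_scale Q2 w1t; rewrite -e size_Q2 => h.
by have := size_scale_leq (w2 t) Q1; rewrite h size_XsubC.
Qed.

Lemma inS_Sp (K : closedFieldType) (theta : 'I_6 -> K) (hinj : injective theta) p :
  inS theta p <-> Sp theta (piMx theta *m p).
Proof.
have hV := V_unit hinj.
have e : (p != 0) = (piMx theta *m p != 0).
  apply/idP/idP; apply: contra => /eqP h; apply/eqP.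
    by rewrite -(mulKmx hV p) h mulmx0.
  by rewrite h mulmx0.
by rewrite /inS /Sp e.
Qed.

Lemma Veps (K : closedFieldType) (theta : 'I_6 -> K) (hinj : injective theta) T :
  piMx theta *m epsSet theta T =
  diag_mx (\row_(j < 6) (if j \in T then -1 else 1)) *m piMx theta.
Proof.
by rewrite /epsSet !mulmxA (mulmxV (V_unit hinj)) mul1mx.
Qed.

Lemma Vf (K : closedFieldType) (theta : 'I_6 -> K) m a :
  (piMx theta *m frakp theta m) a 0 = (theta a - theta m) / omega theta a.
Proof.
rewrite !mxE !big_ord_recl big_ord0 /= !mxE /=.
rewrite !mulr0 !addr0 expr0 expr1 mulr1 mul1r mulrDl addrC.
by rewrite [_^-1 * _]mulrC.
Qed.

Unset Implicit Arguments. Set Strict Implicit.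
Theorem mainTheorem9 (K : closedFieldType) (h2 : (2%:R : K) != 0)
    (F : {poly K}) (theta : 'I_6 -> K)
    (hF : size F = 7%N) (hroots : forall i, root F (theta i))
    (hinj : injective theta)
    (A : 'M[K]_6) (hA : inGLS theta A)
    (T : {set 'I_6})
    (hT : forall p, inDelta0 p <-> inDelta0 (epsSet theta T *m A *m p))
    (sigma : {perm 'I_6})
    (hsigma : forall i, peq (epsSet theta T *m A *m frakp theta i) (frakp theta (sigma i))) :
  forall (i : 'I_6) (p : 'cV[K]_6), inS theta p ->
    peq (A *m eps theta i *m p) (eps theta (sigma i) *m A *m p).
Proof.
have hV := V_unit hinj.
case: hA => hAu hAS.
set V := piMx theta.
pose M := V *m A *m invmx V.
pose Minv := V *m invmx A *m invmx V.
have hMM : Minv *m M = 1%:M.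
  rewrite /M /Minv !mulmxA (mulmxKV hV) -(mulmxA _ (invmx A)) (mulVmx hAu) mulmx1.
  by rewrite (mulmxV hV).
have hMu : M \in unitmx by rewrite /M !unitmx_mul hV hAu unitmx_inv hV.
have hVA : V *m A = M *m V by rewrite /M (mulmxKV hV).
have hMinv : forall y, Sp theta y -> Sp theta (Minv *m y).
  move=> y hy.
  have e : Minv *m y = V *m (invmx A *m (invmx V *m y)) by rewrite /Minv !mulmxA.
  rewrite e; apply/(inS_Sp hinj); apply/hAS; rewrite (mulKVmx hAu).
  by apply/(inS_Sp hinj); rewrite (mulKVmx hV).
clearbody M Minv.
have colnz : forall j, exists k, M k j != 0.
  move=> j; apply/existsP; apply: contraT; rewrite negb_exists => /forallP h0.
  have := congr1 (fun X : 'M[K]_6 => X j j) hMM; rewrite !mxE eqxx big1.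
    by move/eqP; rewrite eq_sym oner_eq0.
  by move=> a _; move: (h0 a); rewrite negbK => /eqP ->; rewrite mulr0.
pose tau j := xchoose (colnz j).
have htau j : M (tau j) j != 0 := xchooseP (colnz j).
have htauu j k : M k j != 0 -> k = tau j.
  by move=> hk; apply: (col_unique hinj h2 hMM hMu hMinv hk (htau j)).
have sumcol (f : 'I_6 -> K) j : \sum_a f a * M a j = f (tau j) * M (tau j) j.
  rewrite (bigD1 (tau j)) //= big1 ?addr0 // => a ha.
  case: (M a j =P 0) => [-> | /eqP h]; first by rewrite mulr0.
  by rewrite (htauu j a h) eqxx in ha.
have tau_inj : injective tau.
  move=> j j' e; apply/eqP; apply: contraT => hjj.
  have h1 := congr1 (fun X : 'M[K]_6 => X j j) hMM.
  have h3 := congr1 (fun X : 'M[K]_6 => X j j') hMM.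
  rewrite /= !mxE !sumcol eqxx in h1; rewrite /= !mxE !sumcol (negPf hjj) in h3.
  move/eqP: h3; rewrite mulf_eq0 (negPf (htau j')) orbF -e => /eqP h0.
  by move: h1; rewrite h0 mul0r => /eqP; rewrite eq_sym oner_eq0.
have rowsum (f : 'I_6 -> K) a0 : \sum_a M (tau a0) a * f a = M (tau a0) a0 * f a0.
  rewrite (bigD1 a0) //= big1 ?addr0 // => a ha.
  case: (M (tau a0) a =P 0) => [-> | /eqP h]; first by rewrite mul0r.
  by move/htauu: h => /tau_inj e; rewrite e eqxx in ha.
have tausig : forall i, tau i = sigma i.
  move=> i; have [c hc e] := hsigma i.
  have := congr1 (fun X : 'cV[K]_6 => (V *m X) (tau i) 0) e.
  rewrite /= (mulmxA V (epsSet theta T *m A)) (mulmxA V (epsSet theta T)) (Veps hinj) -(mulmxA _ V A) hVA -!mulmxA mul_diag_mx -scalemxAr.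
  have vf1 : (V *m frakp theta i) i 0 = 0 by rewrite Vf subrr mul0r.
  have vf2 : (V *m frakp theta (sigma i)) (tau i) 0 =
     (theta (tau i) - theta (sigma i)) / omega theta (tau i) by rewrite Vf.
  rewrite [LHS]mxE [(M *m _) _ _]mxE rowsum vf1 mulr0 mulr0 [RHS]mxE vf2 => /esym/eqP.
  rewrite mulf_eq0 (negPf hc) /= mulf_eq0 invr_eq0 (negPf (omega_neq0 hinj _)) orbF.
  by rewrite subr_eq0 => /eqP /hinj.
move=> i p _; exists 1; first exact: oner_neq0.
rewrite scale1r; apply: (can_inj (mulKmx hV)).
rewrite -/V (mulmxA V (A *m eps theta i)) (mulmxA V A) hVA -(mulmxA M V) (Veps hinj).
rewrite (mulmxA V (eps theta (sigma i) *m A)) (mulmxA V (eps theta (sigma i))) (Veps hinj).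
rewrite -(mulmxA _ V A) hVA -!mulmxA.
set y := V *m p.
rewrite [RHS]mul_diag_mx mul_diag_mx; apply/colP => k; rewrite !mxE mulr_sumr.
apply: eq_bigr => a _; rewrite !mxE.
case: (M k a =P 0) => [-> | /eqP h]; first by rewrite !mul0r mulr0.
move/htauu: h => ->; rewrite !inE -tausig (inj_eq tau_inj).
by rewrite mulrCA.
Qed.
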